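(* Let $T$ be a non-abelian finite simple group. The fixity of $\mathrm{Hol}(T)$ in its action on $T$ (the maximum number of points of $T$ fixed by a non-identity element of $\mathrm{Hol}(T)$) equals $h(T)=\max\{|C_T(x)|:1\neq x\in\mathrm{Aut}(T)\}$.
   Context: $\mathrm{Hol}(T)=T{:}\mathrm{Aut}(T)$ acts on $T$ by $t^{g\alpha}=(g^{-1}t)^\alpha$ for $g\in T$, $\alpha\in\mathrm{Aut}(T)$. *)

(* Defs.v *)
From mathcomp Require Import all_boot all_order all_fingroup all_solvable.
Set Implicit Arguments. Unset Strict Implicit. Unset Printing Implicit Defensive.
Local Open Scope group_scope.

(* Action of the holomorph Hol(T) = T : Aut(T) on T, with an element
   represented as a pair (g, a), g \in T, a \in Aut T:
   t^(g a) = (g^-1 t)^a. *)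
Definition hol_act (gT : finGroupType) (p : gT * {perm gT}) (t : gT) : gT :=
  p.2 (p.1^-1 * t).

Definition hol_fix (gT : finGroupType) (T : {set gT}) (p : gT * {perm gT}) : nat :=
  #|[set t in T | hol_act p t == t]|.

Definition hol_fixity (gT : finGroupType) (T : {set gT}) : nat :=
  \max_(p : gT * {perm gT} | [&& p.1 \in T, p.2 \in Aut T & p != (1, 1)])
     hol_fix T p.

Definition autC (gT : finGroupType) (T : {set gT}) (a : {perm gT}) : {set gT} :=
  [set t in T | a t == t].

Definition hT (gT : finGroupType) (T : {set gT}) : nat :=
  \max_(a in Aut T | a != 1) #|autC T a|.

(* Main.v *)
Require Import Defs.
From mathcomp Require Import all_boot all_order all_fingroup all_solvable.
Set Implicit Arguments. Unset Strict Implicit. Unset Printing Implicit Defensive.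
Local Open Scope group_scope.

Lemma hol_fix_le (gT : finGroupType) (T : {group gT}) (g : gT) (a : {perm gT}) :
  g \in T -> a \in Aut T -> hol_fix T (g, a) <= #|autC T a|.
Proof.
move=> gT_ aA; rewrite /hol_fix.
case: (set_0Vmem [set t in T | hol_act (g, a) t == t]) => [-> | [t0]].
  by rewrite cards0.
rewrite inE /hol_act /= => /andP [t0T /eqP e0].
have mA := Aut_morphic aA.
apply: (leq_trans _ (leq_imset_card (mulg t0) _)).
apply: subset_leq_card; apply/subsetP => t; rewrite inE /hol_act /= => /andP [tT /eqP e].
apply/imsetP; exists (t0^-1 * t); last by rewrite mulKVg.
have uT : t0^-1 * t \in T by rewrite groupM ?groupV.
rewrite inE uT /=; apply/eqP.
have : a (g^-1 * t0 * (t0^-1 * t)) = t0 * a (t0^-1 * t).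
  rewrite (morphicP mA) ?groupM ?groupV //.
  by rewrite e0.
rewrite -mulgA mulKVg e => h.
by rewrite {2}h mulKg.
Qed.

Lemma hol_fix_1 (gT : finGroupType) (T : {group gT}) (g : gT) :
  g != 1 -> hol_fix T (g, 1%g) = 0.
Proof.
move=> gn1; apply/eqP; rewrite cards_eq0; apply/eqP/setP => t.
rewrite !inE /hol_act /= perm1.
apply/negbTE; rewrite negb_and; apply/orP; right.
apply/eqP => h; move/eqP: gn1; apply.
have : g^-1 = 1 by apply: (mulIg t); rewrite mul1g.
by move/eqP; rewrite eq_invg1 => /eqP.
Qed.

Theorem lemma3p3 (gT : finGroupType) (T : {group gT}) :
  simple T -> ~~ abelian T -> hol_fixity T = hT T.
Proof.
move=> _ _; apply/eqP; rewrite eqn_leq; apply/andP; split.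
  apply/bigmax_leqP => [[g a]] /= /and3P [gT_ aA ne].
  have [a1 | an1] := eqVneq a 1.
    subst a; have gn1 : g != 1 by apply: contraNneq ne => ->.
    by rewrite hol_fix_1.
  apply: leq_trans (hol_fix_le gT_ aA) _.
  by apply: (leq_bigmax_cond a); rewrite aA an1.
apply/bigmax_leqP => a /andP [aA an1].
have -> : #|autC T a| = hol_fix T (1, a).
  rewrite /hol_fix /autC; apply: eq_card => t.
  by rewrite !inE /hol_act /= invg1 mul1g.
apply: (leq_bigmax_cond (1, a)) => /=.
rewrite group1 aA /=; apply: contra an1 => /eqP [->] //.
Qed.
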